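(* Let $m\ge 2$ and let $x=(x_1,\dots,x_m)$ be a sequence of positive integers in which at most one $x_i$ equals $1$. Then $|\textsf{L-NCN}(x)|=\left(\sum_{i=1}^m x_i-1\right)_{m-2}$.
   Context: $(a)_b=a(a-1)\cdots(a-b+1)$ denotes the falling factorial (with $(a)_0=1$). For a sequence $x=(x_1,\dots,x_t)$ of positive integers with sum $N$, $\textsf{L-NC}(x)$ is the set of words $w_1\cdots w_N$ over $[t]$ with exactly $x_i$ occurrences of each letter $i$ and no indices $a<b<c<d$, letters $i\neq j$ with $w_a=w_c=i$, $w_b=w_d=j$ (labeled noncrossing partitions of type $x$). $\textsf{L-NCN}(x)$ is the set of equivalence classes of elements of $\textsf{L-NC}(x)$ under cyclic rotation of words (labeled noncrossing necklaces of type $x$). *)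

(* Defs.v *)
From mathcomp Require Import all_boot.
Set Implicit Arguments. Unset Strict Implicit. Unset Printing Implicit Defensive.

Definition lncn_len m (x : 'I_m -> nat) : nat := \sum_(i < m) x i.

Definition noncrossing m N (w : N.-tuple 'I_m) : bool :=
  [forall a : 'I_N, forall b : 'I_N, forall c : 'I_N, forall d : 'I_N,
     ~~ [&& (a < b)%N, (b < c)%N, (c < d)%N,
            tnth w a == tnth w c, tnth w b == tnth w d & tnth w a != tnth w b]].

Definition LNC m (x : 'I_m -> nat) : {set (lncn_len x).-tuple 'I_m} :=
  [set w : (lncn_len x).-tuple 'I_m |
     [forall i : 'I_m, count_mem i w == x i] && noncrossing w].

Definition rot_equiv m N (w w' : N.-tuple 'I_m) : bool :=
  [exists k : 'I_N.+1, val w' == rot k (val w)].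

Definition LNCN m (x : 'I_m -> nat) : {set {set (lncn_len x).-tuple 'I_m}} :=
  [set [set w' in LNC x | rot_equiv w w'] | w in LNC x].

(* Main.v *)
Require Import Defs.
From mathcomp Require Import all_boot zify.
Set Implicit Arguments. Unset Strict Implicit. Unset Printing Implicit Defensive.

Section Count.
Variables (m : nat) (x : 'I_m -> nat) (x0 : 'I_m).
Hypothesis xpos : forall i, 0 < x i.

Definition ext_ok (a : 'I_m) (s : seq 'I_m) : bool :=
  (count_mem a s < x a) &&
  ((a \in s) ==> all (fun e => count_mem e s == x e) (take (index a s) s)).
Fixpoint good (s : seq 'I_m) : bool :=
  if s is a :: s' then good s' && ext_ok a s' else true.
Definition full s := good s && [forall e, count_mem e s == x e].
Fixpoint cntc (L : nat) (s : seq 'I_m) : nat :=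
  if L is L'.+1 then \sum_(a : 'I_m) cntc L' (a :: s) else (full s : nat).

Lemma cntcE L s : cntc L s = \sum_(t : L.-tuple 'I_m) full (rev t ++ s).
Proof.
elim: L s => [|L IH] s /=.
  by rewrite (big_pred1 [tuple]) // => t; rewrite /= [t]tuple0; apply/esym/eqP.
rewrite (eq_bigr (fun a => \sum_(t : L.-tuple 'I_m) full (rev t ++ a :: s)));
  last by move=> a _; rewrite IH.
rewrite pair_big /=.
rewrite (reindex (fun p : 'I_m * L.-tuple 'I_m => [tuple of p.1 :: p.2])) /=.
  by apply: eq_bigr => -[a t] _ /=; rewrite rev_cons cat_rcons.
exists (fun t : L.+1.-tuple 'I_m => (thead t, [tuple of behead t])).
  by move=> [a t] _ /=; rewrite theadE; congr pair; apply: val_inj.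
by move=> t _ /=; rewrite [RHS]tuple_eta.
Qed.

Lemma good_suffix t u : good (t ++ u) -> good u.
Proof. by elim: t => //= a t IH /andP[/IH]. Qed.

Lemma cntc0 L s : ~~ good s -> cntc L s = 0.
Proof.
move=> gs; rewrite cntcE big1 // => t _.
by rewrite /full; case g: (good _) => //; move: gs; rewrite (good_suffix g).
Qed.


Definition ncP (s : seq 'I_m) := forall a b c d, a < b -> b < c -> c < d -> d < size s ->
  nth x0 s a = nth x0 s c -> nth x0 s b = nth x0 s d -> nth x0 s a = nth x0 s b.
Definition nbP (s : seq 'I_m) := forall b c d, b < c -> c < d -> d < size s ->
  nth x0 s b = nth x0 s d -> nth x0 s b <> nth x0 s c ->
  x (nth x0 s c) <= count_mem (nth x0 s c) s.
Definition cnt_le (s : seq 'I_m) := forall e, count_mem e s <= x e.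

Lemma good_le s : good s -> cnt_le s.
Proof.
elim: s => [|a s IH] /=; first by move=> _ e.
case/andP=> /IH H /andP[Ha _] e /=.
case: (eqVneq a e) => [<-|ne] /=; first by rewrite add1n.
by rewrite add0n; exact: H.
Qed.

Lemma nth_take_index (a : 'I_m) s p : p < index a s -> nth x0 s p != a.
Proof. by move=> H; have := before_find x0 H; rewrite /= eq_sym => ->. Qed.

Lemma index_le (a : 'I_m) s p : nth x0 s p = a -> index a s <= p.
Proof.
move=> E; rewrite leqNgt; apply/negP => /(nth_take_index) .
by rewrite E eqxx.
Qed.

Lemma size_take_index (a : 'I_m) s p : p < index a s -> p < size (take (index a s) s).
Proof.
move=> H; rewrite size_take; case: ifP => // _.
by apply: leq_trans H (index_size _ _).
Qed.

Lemma in_take_index (a : 'I_m) s p : p < index a s ->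
  nth x0 s p \in take (index a s) s.
Proof.
move=> H; have Hs: p < size s by apply: leq_trans H (index_size _ _).
rewrite -(nth_take x0 H); apply: mem_nth; rewrite size_take.
by case: ifP => // _; apply: leq_trans H (index_size _ _).
Qed.

Lemma good_nc s : good s -> ncP s /\ nbP s.
Proof.
elim: s => [|a s IH] /=.
  by split => [a b c d _ _ _ //|b c d _ _ //].
case/andP=> /IH [nc nb] /andP[Hlt Hall]; split.
- move=> [|a0] [|b] [|c] [|d] //= ab bc cd ds E1 E2.
  + case: (eqVneq a (nth x0 s b)) => // ne.
    have ne2 : nth x0 s b <> nth x0 s c by rewrite -E1 => h; move: ne; rewrite h eqxx.
    have := nb b c d bc cd ds E2 ne2; rewrite -E1.
    by rewrite leqNgt Hlt.
  + exact: (nc a0 b c d).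
- move=> [|b] [|c] [|d] //= bc cd ds E ne.
  + have as_ : a \in s by rewrite E mem_nth.
    have ne' : nth x0 s c != a by apply/eqP => h; apply: ne; rewrite h.
    rewrite /= eq_sym (negbTE ne') add0n.
    have [ci|ic] := ltnP c (index a s).
      move/implyP: Hall => /(_ as_) /all_nthP Hall.
      have cs := size_take_index ci.
      by move: (Hall x0 c cs); rewrite nth_take // => /eqP ->.
    have ic' : index a s < c.
      rewrite ltn_neqAle ic andbT; apply/eqP => h.
      by move: ne'; rewrite -h nth_index // eqxx.
    have := nb (index a s) c d ic' cd ds.
    have ne3 : a <> nth x0 s c by move=> h; move: ne'; rewrite -h eqxx.
    by rewrite nth_index // => /(_ E ne3).
  + have := nb b c d bc cd ds E ne.
    move=> H; apply: leq_trans H _; rewrite /= leq_addl //.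
Qed.

Lemma nc_good s : cnt_le s -> ncP s -> nbP s -> good s.
Proof.
elim: s => [|a s IH] //= cl nc nb.
have cl' : cnt_le s.
  by move=> e; apply: leq_trans (cl e); rewrite /= leq_addl.
have nc' : ncP s.
  by move=> a0 b c d ab bc cd ds; apply: (nc a0.+1 b.+1 c.+1 d.+1).
have nb' : nbP s.
  move=> b c d bc cd ds E ne.
  have := nb b.+1 c.+1 d.+1 bc cd ds E ne; rewrite /=.
  case: eqVneq => [ea|_] //.
  have := nc 0 b.+1 c.+1 d.+1 (ltn0Sn _) bc cd ds; rewrite /= -ea.
  by move=> /(_ erefl E) h; case: ne; rewrite -h ea.
rewrite IH //=; apply/andP; split.
  by have := cl a; rewrite /= eqxx add1n.
apply/implyP => as_; apply/(all_nthP x0) => p; rewrite size_take.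
have ps : index a s <= size s by apply: index_size.
move=> pl; have pi : p < index a s by move: pl; case: ifP => // /negbT; rewrite -leqNgt => h /leq_trans; apply; apply: h.
rewrite nth_take //.
have ne := nth_take_index pi.
have ps' : p < size s by apply: leq_trans pi (index_size _ _).
have is_ : index a s < size s by rewrite index_mem.
have := nb 0 p.+1 (index a s).+1 (ltn0Sn _) pi is_; rewrite /= nth_index //.
have ne4 : a <> nth x0 s p by move=> h; move: ne; rewrite -h eqxx.
move=> /(_ erefl ne4).
rewrite eq_sym (negbTE ne) add0n => h; by rewrite eqn_leq h cl'.
Qed.


Definition nU (s : seq 'I_m) := #|[pred e | e \notin s]|.
Definition MU (s : seq 'I_m) := \sum_(e | e \notin s) x e.
Definition RU (s : seq 'I_m) := \sum_(e | e \in s) (x e - count_mem e s).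

Lemma fresh_meas (a : 'I_m) (s : seq 'I_m) : a \notin s ->
  [/\ nU s = (nU (a :: s)).+1, MU s = MU (a :: s) + x a &
      RU (a :: s) = RU s + (x a).-1].
Proof.
move=> as_; split.
- rewrite /nU (cardD1 a) inE as_ add1n; congr _.+1; apply: eq_card => e.
  by rewrite !inE negb_or.
- rewrite /MU (bigD1 a) //= addnC; congr (_ + _); apply: eq_bigl => e.
  by rewrite in_cons negb_or andbC.
- rewrite /RU (bigD1 a) ?mem_head //= eqxx (count_memPn as_) subn1 addnC.
  congr (_ + _); rewrite [RHS](eq_bigl (fun e => (e \in a :: s) && (e != a))).
    apply: eq_bigr => e /andP[_ ea] /=; by rewrite eq_sym (negbTE ea).
  move=> e; rewrite in_cons; case: eqVneq => [->|] //=.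
  by rewrite (negbTE as_).
  by rewrite andbT.
Qed.

Lemma top_meas (a : 'I_m) (s : seq 'I_m) : a \in s -> count_mem a s < x a ->
  [/\ nU (a :: s) = nU s, MU (a :: s) = MU s & (RU (a :: s)).+1 = RU s].
Proof.
move=> as_ lt; have E : forall e, (e \in a :: s) = (e \in s).
  by move=> e; rewrite in_cons; case: eqVneq => // ->.
split.
- by rewrite /nU; apply: eq_card => e; rewrite !inE; have := E e; rewrite in_cons => ->.
- by rewrite /MU; apply: eq_bigl => e; rewrite E.
- rewrite /RU (bigD1 a) ?mem_head // [RHS](bigD1 a) //= eqxx add1n.
  rewrite -addSn subnSK //; congr (_ + _); apply: eq_big => e.
    by rewrite E.
  by case/andP=> _ ea; rewrite eq_sym (negbTE ea).
Qed.

Definition isopen (s : seq 'I_m) := fun e => count_mem e s < x e.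

Lemma RU_pos s : (0 < RU s) = has (isopen s) s.
Proof.
apply/idP/hasP => [|[e es eo]].
  rewrite lt0n sum_nat_eq0 => /forall_inPn [e es]; rewrite subn_eq0 -ltnNge.
  by move=> h; exists e.
rewrite /RU (bigD1 e) //=; apply: leq_trans (leq_addr _ _).
by rewrite subn_gt0.
Qed.

Lemma top_good (s : seq 'I_m) (a : 'I_m) : good s -> a \in s ->
  good (a :: s) = has (isopen s) s && (a == nth x0 s (find (isopen s) s)).
Proof.
move=> gs as_ /=; rewrite gs /= /ext_ok as_ /=.
set f := find (isopen s) s.
apply/andP/andP => [[ao /(all_nthP x0) Hall]|[hs /eqP ->]].
  have hs : has (isopen s) s by apply/hasP; exists a.
  split => //.
  have fi : f <= index a s.
    rewrite leqNgt; apply/negP => H.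
    have := before_find x0 H; rewrite nth_index // /isopen.
    by rewrite ao.
  have if_ : index a s <= f.
    rewrite leqNgt; apply/negP => H.
    have := nth_find x0 hs; rewrite /isopen -/f.
    have := Hall f (size_take_index H); rewrite nth_take // => /eqP ->.
    by rewrite ltnn.
  have -> : f = index a s by apply/eqP; rewrite eqn_leq fi if_.
  by rewrite nth_index.
have fs : f < size s by rewrite -has_find.
have ns := mem_nth x0 fs.
have Ei : index (nth x0 s f) s = f.
  apply/eqP; rewrite eqn_leq index_le //=.
  rewrite leqNgt; apply/negP => H.
  have := before_find x0 H; rewrite nth_index //.
  by rewrite /f nth_find.
split; first by have := nth_find x0 hs.
apply/(all_nthP x0) => p; rewrite Ei => pf.
have pf' : p < f by move: pf; rewrite size_take fs.
rewrite nth_take //.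
have := before_find x0 pf'; rewrite /isopen => /negbT; rewrite -leqNgt => h.
by rewrite eqn_leq h (good_le gs).
Qed.


Definition F n M R := if n is n'.+1 then R.+1 * (R + M) ^_ n' else 1.

Lemma arith R M n P : n.+2 <= M ->
  R * (P * ((R+M).-1 - n)) + (n.+2 * R + M) * P = R.+1 * ((R + M) * P).
Proof. move=> h. have E : (R+M).-1 - n = R + M - n.+1 by lia. rewrite E. nia. Qed.

Lemma x_le_MU (a : 'I_m) (s : seq 'I_m) : a \notin s -> x a <= MU s.
Proof. by move=> as_; rewrite /MU (bigD1 a) //= leq_addr. Qed.

Lemma nU_le_MU s : nU s <= MU s.
Proof. by rewrite /nU -sum1_card /MU; apply: leq_sum => e _; apply: xpos. Qed.

Lemma MU0 s e : MU s = 0 -> e \in s.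
Proof.
move=> h; apply/negPn/negP => es; have := x_le_MU es; have := xpos e.
rewrite h; lia.
Qed.

Lemma nU0 s : nU s = 0 -> forall e, e \in s.
Proof.
by move=> /card0_eq h e; apply/negPn/negP => es; have := h e; rewrite !inE es.
Qed.

Lemma cntc_formula L s : good s -> L = MU s + RU s ->
  cntc L s = F (nU s) (MU s) (RU s).
Proof.
elim: L s => [|L IH] s gs.
  move=> /esym /eqP; rewrite addn_eq0 => /andP[/eqP M0 /eqP R0] /=.
  have ins e : e \in s := MU0 e M0.
  have -> : nU s = 0.
    by apply: eq_card0 => e; rewrite !inE ins.
  rewrite /full gs M0 R0 /=; have -> // : [forall e, count_mem e s == x e].
  apply/forallP => e; move: R0; rewrite /RU => /eqP; rewrite sum_nat_eq0.
  move=> /forall_inP /(_ e (ins e)); rewrite subn_eq0 => h.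
  by rewrite eqn_leq h (good_le gs).
move=> EL /=; rewrite (bigID (fun a => a \in s)) /=.
set R := RU s in EL *; set M := MU s in EL *.
have PA : \sum_(a | a \in s) cntc L (a :: s) =
          if has (isopen s) s then F (nU s) M R.-1 else 0.
  rewrite (eq_bigr (fun a => (good (a :: s)) * F (nU s) M R.-1)); last first.
    move=> a as_; case g: (good (a :: s)); last by rewrite cntc0 ?g.
    move: (g) => /= /andP[_ /andP[ao _]].
    have [En Em Er] := top_meas as_ ao.
    rewrite (IH _ g); last by rewrite Em; move: EL Er; rewrite /M /R; lia.
    by rewrite En Em mul1n /R -Er.
  case: (boolP (has (isopen s) s)) => hs; last first.
    by rewrite big1 // => a as_; rewrite top_good // (negbTE hs).
  have fs : find (isopen s) s < size s by rewrite -has_find.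
  rewrite (bigD1 (nth x0 s (find (isopen s) s))) ?mem_nth // top_good ?mem_nth //.
  rewrite hs eqxx mul1n big1; first exact: addn0.
  move=> a /andP[as_ ne]; by rewrite top_good // hs (negbTE ne).
have PB : \sum_(a | a \notin s) cntc L (a :: s) =
          \sum_(a | a \notin s) F (nU s).-1 (M - x a) (R + (x a).-1).
  apply: eq_bigr => a as_; have [En Em Er] := fresh_meas as_.
  have g : good (a :: s).
    by rewrite /= gs /ext_ok (negbTE as_) (count_memPn as_) xpos.
  have h : L = MU (@cons 'I_m a s) + RU (@cons 'I_m a s).
    by move: EL; rewrite /M /R Em Er; have := xpos a; lia.
  rewrite (IH _ g h).
  by rewrite Er En /M Em addnK.
rewrite PA PB.
have S1 : \sum_(a | a \notin s) 1 = nU s by rewrite /nU -sum1_card.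
have HR := RU_pos s; rewrite -/R in HR.
case En: (nU s) => [|[|n']].
- have M0 : M = 0 by rewrite /M /MU big_pred0 // => a; rewrite (nU0 En a).
  rewrite big_pred0 => [|a]; last by rewrite (nU0 En a).
  have : 0 < R by move: EL; rewrite M0; lia.
  by rewrite HR => ->.
- rewrite (eq_bigr (fun _ => 1)) // S1 En /=.
  by case: (boolP (has _ _)) HR => hs /= hR; rewrite ?ffactn0; lia.
- set P := (R + M).-1 ^_ n'.
  rewrite (eq_bigr (fun a => (R + x a) * P)); last first.
    move=> a as_ /=; have := x_le_MU as_; have := xpos a; rewrite -/M => h1 h2.
    have -> : (R + (x a).-1).+1 = R + x a by lia.
    by have -> : R + (x a).-1 + (M - x a) = (R + M).-1 by lia.
  rewrite -big_distrl big_split /=.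
  have SR : \sum_(a | a \notin s) R = nU s * R by rewrite /nU -sum_nat_const.
  have SM : \sum_(a | a \notin s) x a = M by [].
  rewrite SR SM En.
  have nM : n'.+2 <= M by rewrite -En nU_le_MU.
  have RH : R.+1 * (R+M)^_(n'.+1) = R.+1 * ((R+M) * P) by rewrite ffactnS.
  have LA : (if has (isopen s) s then F n'.+2 M R.-1 else 0) = R * (P * ((R+M).-1 - n')).
    case: (boolP (has _ _)) HR => hs hR /=; last by move: hR; case: (R).
    by move: hR; rewrite /P; case: (R) => // r _ /=; rewrite ffactnSr.
  rewrite LA RH -(@arith R M n' P nM) //.
Qed.

End Count.

Section Rot.
Variables (m : nat) (x0 : 'I_m).

Lemma ncP_rot1 (s : seq 'I_m) : ncP x0 s -> ncP x0 (rot 1 s).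
Proof.
case: s => [|a s] H; first by [].
rewrite rot1_cons => a0 b c d ab bc cd; rewrite size_rcons => ds.
rewrite !nth_rcons.
have [dl|dg] := ltnP d (size s).
  have al : a0 < size s by lia.
  have bl : b < size s by lia.
  have cl : c < size s by lia.
  rewrite al bl cl => E1 E2.
  exact: (H a0.+1 b.+1 c.+1 d.+1).
have dE : d = size s by lia.
have al : a0 < size s by lia.
have bl : b < size s by lia.
have cl : c < size s by lia.
rewrite al bl cl dE eqxx => E1 E2.
have := H 0 a0.+1 b.+1 c.+1 (ltn0Sn _) ab bc cl (esym E2) E1 => /= h.
by rewrite -h E2.
Qed.

Lemma ncP_rot k (s : seq 'I_m) : ncP x0 s -> ncP x0 (rot k s).
Proof.
move=> H; elim: k => [|k IH]; first by rewrite rot0.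
have [ks|ks] := ltnP k (size s).
  by rewrite rotS //; apply: ncP_rot1.
by rewrite rot_oversize //; apply: leqW.
Qed.

Lemma rot_nth e (s : seq 'I_m) p : rot e s = s -> p + e < size s ->
  nth x0 s p = nth x0 s (p + e).
Proof.
move=> E pe; rewrite -[in LHS]E /rot nth_cat size_drop.
have -> : p < size s - e by lia.
by rewrite nth_drop addnC.
Qed.

Lemma rot_period (s : seq 'I_m) k (i j : 'I_m) : ncP x0 s -> 0 < k -> k < size s ->
  rot k s = s -> i \in s -> j \in s -> i != j -> False.
Proof.
move=> nc k0 kN E is_ js ij.
set N := size s.
have E' : rot (N - k) s = s.
  by rewrite -{1}E -rotD ?subnK ?rot_size // ?leq_subr // ltnW.
pose e := if 2 * k <= N then k else N - k.
have Ee : rot e s = s by rewrite /e; case: ifP.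
have e0 : 0 < e by rewrite /e; case: ifP => _; lia.
have e2 : 2 * e <= N by rewrite /e; case: ifP => h; lia.
have idx (l : 'I_m) : l \in s -> index l s < e.
  move=> ls; rewrite ltnNge; apply/negP => h.
  have il : index l s < N by rewrite index_mem.
  have := rot_nth (p := index l s - e) Ee; rewrite subnK // => /(_ il).
  rewrite nth_index // => /index_le; lia.
have key (a b : 'I_m) : a \in s -> b \in s -> index a s < index b s -> a = b.
  move=> as_ bs ab.
  have ia := idx a as_; have ib := idx b bs.
  have hla : index a s + e < N by lia.
  have hlb : index b s + e < N by lia.
  have h1 : nth x0 s (index a s + e) = a by rewrite -(rot_nth Ee hla) nth_index.
  have h2 : nth x0 s (index b s + e) = b by rewrite -(rot_nth Ee hlb) nth_index.
  have := nc (index a s) (index b s) (index a s + e) (index b s + e) ab.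
  rewrite h1 h2 !nth_index //; apply => //; rewrite /N in hla hlb; lia.
have [ab|ba|eq] := ltngtP (index i s) (index j s).
- by move/eqP: ij; apply; apply: key.
- by move/eqP: ij; apply; apply/esym; apply: key.
- by move/eqP: ij; apply; rewrite -(nth_index x0 is_) eq nth_index.
Qed.

End Rot.

Section Main.
Variables (m : nat) (x : 'I_m -> nat) (x0 : 'I_m).
Hypothesis xpos : forall i, 0 < x i.
Local Notation N := (lncn_len x).

Lemma nc_ncP (w : N.-tuple 'I_m) : noncrossing w <-> ncP x0 w.
Proof.
split.
- move=> /forallP H a b c d ab bc cd dN E1 E2.
  have dN' : d < N by rewrite size_tuple in dN.
  have hA : a < N by lia.
  have hB : b < N by lia.
  have hC : c < N by lia.
  move: (H (Ordinal hA)) => /forallP /(_ (Ordinal hB)) /forallP /(_ (Ordinal hC)).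
  move=> /forallP /(_ (Ordinal dN')).
  by rewrite !(tnth_nth x0) /= ab bc cd E1 E2 !eqxx /= => /negPn /eqP.
- move=> H; apply/forallP => a; apply/forallP => b; apply/forallP => c.
  apply/forallP => d.
  apply/negP => /and5P [ab bc cd /eqP E1 /andP [/eqP E2 ne]].
  rewrite !(tnth_nth x0) in E1 E2 ne.
  have := H a b c d ab bc cd; rewrite size_tuple => /(_ (ltn_ord d) E1 E2) h.
  by rewrite h eqxx in ne.
Qed.

Lemma LNC_full (w : N.-tuple 'I_m) : (w \in LNC x) = full x w.
Proof.
rewrite inE /full.
case cw: [forall i, count_mem i w == x i]; rewrite ?andbF ?andbT //=.
apply/idP/idP => H.
- apply: nc_good; first by move=> e; rewrite (eqP (forallP cw e)).
  + exact/nc_ncP.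
  + by move=> b c d _ _ _ _ _; rewrite (eqP (forallP cw _)).
- by apply/nc_ncP; exact: (good_nc x0 H).1.
Qed.


Lemma card_LNC : 0 < m -> #|LNC x| = N ^_ m.-1.
Proof.
move=> m0.
have -> : #|LNC x| = \sum_(t : N.-tuple 'I_m) full x t.
  rewrite -sum1_card big_mkcond /=; apply: eq_bigr => t _.
  by rewrite LNC_full; case: full.
rewrite (reindex_inj (h := fun t : N.-tuple 'I_m => [tuple of rev t])) /=;
  last by move=> t1 t2 /(congr1 val) /= /(congr1 rev); rewrite !revK => /val_inj.
transitivity (cntc x N [::]).
  by rewrite cntcE; apply: eq_bigr => t _; rewrite cats0.
have MU0 : MU x [::] = N by rewrite /MU; apply: eq_bigl => e; rewrite in_nil.
have RU0 : RU x [::] = 0 by rewrite /RU big_pred0 // => e; rewrite in_nil.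
have nU0 : nU ([::] : seq 'I_m) = m.
  by rewrite /nU -[RHS]card_ord; apply: eq_card => e; rewrite !inE.
rewrite (cntc_formula x0 xpos (s := [::])) // ?MU0 ?RU0 ?addn0 // nU0.
have FE n : 0 < n -> F n N 0 = N ^_ n.-1 by case: n => // n _ /=; rewrite mul1n.
exact: FE.
Qed.

Lemma rot_equivP (w w' : N.-tuple 'I_m) :
  reflect (exists k, k <= N /\ val w' = rot k w) (rot_equiv w w').
Proof.
apply: (iffP existsP) => [[k /eqP E]|[k [kN E]]].
  by exists k; split => //; rewrite -ltnS ltn_ord.
by exists (Ordinal (kN : k < N.+1)); apply/eqP.
Qed.

Lemma rot_equiv_sym (a b : N.-tuple 'I_m) : rot_equiv a b -> rot_equiv b a.
Proof.
move=> /rot_equivP [k [kN E]]; apply/rot_equivP; exists (N - k); split.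
  by rewrite leq_subr.
have h := rotK k (val a); rewrite /rotr size_rot size_tuple in h.
by rewrite E h.
Qed.

Lemma rot_equiv_trans (a b c : N.-tuple 'I_m) :
  rot_equiv a b -> rot_equiv b c -> rot_equiv a c.
Proof.
move=> /rot_equivP [k1 [_ E1]] /rot_equivP [k2 [_ E2]]; apply/rot_equivP.
exists (rot_add a k1 k2); split; first by have := leq_rot_add k1 k2 a; rewrite size_tuple.
by rewrite E2 E1 rot_rot_add.
Qed.

Lemma rot_equiv_equiv : {in LNC x & &, equivalence_rel (@rot_equiv m N)}.
Proof.
move=> a b c _ _ _; split.
  by apply/rot_equivP; exists 0; split => //; rewrite rot0.
move=> ab; apply/idP/idP => H.
  exact: rot_equiv_trans (rot_equiv_sym ab) H.
exact: rot_equiv_trans ab H.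
Qed.

Hypothesis hm : 1 < m.

Lemma rotLNC (w : N.-tuple 'I_m) k : w \in LNC x -> [tuple of rot k w] \in LNC x.
Proof.
rewrite !inE => /andP[cw ncw]; apply/andP; split.
  apply/forallP => e /=.
  have P : perm_eq (rot k w) w by rewrite perm_rot perm_refl.
  by rewrite (permP P) (forallP cw e).
apply/nc_ncP; apply: ncP_rot; exact/nc_ncP.
Qed.

Lemma class_size (w : N.-tuple 'I_m) : w \in LNC x ->
  #|[set w' in LNC x | rot_equiv w w']| = N.
Proof.
move=> Hw.
have N0 : 0 < N.
  rewrite /lncn_len (bigD1 x0) //=; apply: leq_trans (leq_addr _ _); exact: xpos.
have -> : [set w' in LNC x | rot_equiv w w'] =
          [set [tuple of rot k w] | k : 'I_N].
  apply/setP => w'; rewrite !inE; apply/andP/imsetP.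
  - case=> Hw' /rot_equivP [k [kN E]].
    have [kl|kg] := ltnP k N.
      by exists (Ordinal kl) => //; apply: val_inj; rewrite /= E.
    exists (Ordinal N0) => //; apply: val_inj; rewrite /= E rot0.
    have -> : k = size w by rewrite size_tuple; lia.
    by rewrite rot_size.
  - case=> k _ ->; split; first by have := rotLNC k Hw; rewrite inE.
    by apply/rot_equivP; exists k; split => //; apply: ltnW.
rewrite card_imset ?card_ord //.
have key (i j : nat) : i < j -> j < N -> rot i w = rot j w -> False.
  move=> ij jN E.
  set u := rot i w.
  have Eu : rot (j - i) u = u.
    by rewrite /u -rotD ?subnK ?size_tuple 1?ltnW // E.
  have ncu : ncP x0 u.
    by apply: ncP_rot; apply/nc_ncP; move: Hw; rewrite inE => /andP[].
  have inu (l : 'I_m) : l \in u.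
    have P : perm_eq u w by rewrite perm_rot perm_refl.
    move: Hw; rewrite inE => /andP[/forallP /(_ l) /eqP cw _].
    by rewrite -has_pred1 has_count (permP P) cw xpos.
  have su : size u = N by rewrite size_rot size_tuple.
  apply: (rot_period (i := Ordinal (ltnW hm)) (j := Ordinal hm) ncu _ _ Eu) => //.
  + by rewrite subn_gt0.
  + by rewrite su; lia.
move=> i j /(congr1 val) /= E; apply/val_inj => /=.
case: (ltngtP i j) => // h; exfalso.
  exact: key h (ltn_ord j) E.
exact: key h (ltn_ord i) (esym E).
Qed.

End Main.

Unset Implicit Arguments.
Theorem mainTheorem3 (m : nat) (x : 'I_m -> nat) :
  (2 <= m)%N ->
  (forall i, (0 < x i)%N) ->
  (#|[set i : 'I_m | x i == 1%N]| <= 1)%N ->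
  #|LNCN x| = ((lncn_len x).-1 ^_ (m - 2))%N.
Proof.
move=> hm xpos _.
pose x0 : 'I_m := Ordinal (ltnW hm).
have Pt := equivalence_partitionP (@rot_equiv_equiv m x).
have CS : {in LNCN x, forall A : {set (lncn_len x).-tuple 'I_m}, #|A| = lncn_len x}.
  by move=> A /imsetP [w Hw ->]; exact (class_size x0 xpos hm Hw).
have := card_uniform_partition CS Pt.
rewrite (card_LNC x0 xpos) ?(ltnW hm) //.
have N0 : 0 < lncn_len x.
  rewrite /lncn_len (bigD1 x0) //=; apply: leq_trans (leq_addr _ _); exact: xpos.
move: #|LNCN x| => c.
have -> : m.-1 = (m - 2).+1 by lia.
move: (m - 2) (lncn_len x) N0 => k [|N'] // _.
by rewrite ffactSS /= [c * _]mulnC => /eqP; rewrite eqn_pmul2l // => /eqP <-.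
Qed.
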